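(* Let $F$ be a discrete time regulatory network on $[0,1]^d$ satisfying coordinatewise injectivity whose interaction matrix $K$ is non-degenerated, and let $(V,\mathcal A)$ be its underlying network. If $\{i,j\}\subset V$ is a 2-loop in $(V,\mathcal A)$ whose isolated end is $j$, then $i$ drives $j$.
   Context: $V=\{1,\dots,d\}$; $K\in[0,1]^{d\times d}$ with $\sum_iK_{i,j}=1$ for each $j$; $s\in\{-1,0,1\}^{d\times d}$, $T\in[0,1]^{d\times d}$ with $s_{i,j}=0$ iff $K_{i,j}=0$ and $T_{i,j}=0$ iff $K_{i,j}=0$; $a\in[0,1]$; $H(x)=0$ for $x\le0$, $1$ otherwise; $F(x)_j=ax_j+(1-a)\sum_iK_{i,j}H(s_{i,j}(x_i-T_{i,j}))$. Underlying network: $\mathcal A=\{(i,j):K_{i,j}>0\}$. Coordinatewise injectivity: for each $j$, with $\mathcal F_j=\{x\mapsto ax+(1-a)\sum_i\epsilon_iK_{i,j}:\epsilon\in\{0,1\}^d\}$, distinct $f,f'\in\mathcal F_j$ have $f([0,1])\cap f'([0,1])=\emptyset$. $K$ is non-degenerated if for each $j$ the map $\epsilon\mapsto\sum_i\epsilon_iK_{i,j}$, defined on $\{\epsilon\in\{0,1\}^d:\epsilon_i=0$ whenever $K_{i,j}=0\}$, is injective. A 2-loop with isolated end $j$ is a pair $\{i,j\}$ such that $(i,j)\in\mathcal A$ and $i$ is the only tail of an arrow with head $j$, and $(j,i)\in\mathcal A$ and $i$ is the only head of an arrow with tail $j$. Base partition: $\mathcal P_k$ is the set of nonempty level sets of $u\mapsto(H(s_{k,l}(u-T_{k,l})))_{l=1}^d$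 on $[0,1]$, $\mathcal P=\{\prod_kI_k:I_k\in\mathcal P_k\}$; $\mathcal P^1=\mathcal P$, $\mathcal P^{t+1}=\{F^{-1}(\mathbf I)\cap\mathbf J\ne\emptyset:\mathbf I\in\mathcal P^t,\mathbf J\in\mathcal P\}$; $\mathcal Q^t=\{F^{t-1}(\mathbf I):\mathbf I\in\mathcal P^t\}$, $\mathcal Q_k^t=\{\Pi_k\mathbf J:\mathbf J\in\mathcal Q^t\}$ ($\Pi_k$ the $k$-th coordinate projection). For $J\in\mathcal Q_i^t$ let $C_j(J)=\{\Pi_j\mathbf J:\mathbf J\in\mathcal Q^t,\ \Pi_i\mathbf J=J\}$. Vertex $i$ drives vertex $j$ if there is $m_{i,j}\in\mathbb N$ with $\#C_j(J)\le m_{i,j}$ for all $J\in\bigcup_{t\ge1}\mathcal Q_i^t$. *)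

(* Defs.v *)
From HB Require Import structures.
From mathcomp Require Import all_boot all_order all_algebra.
From mathcomp Require Import classical_sets reals.
Set Implicit Arguments. Unset Strict Implicit. Unset Printing Implicit Defensive.
Import Order.TTheory GRing.Theory Num.Theory.
Local Open Scope ring_scope.
Local Open Scope classical_set_scope.

Section RegNet.
Variables (R : realType) (d : nat).

Definition Heav (x : R) : R := if x <= 0 then 0 else 1.

Definition unitI : set R := [set u | 0 <= u <= 1].

Definition regF (K s T : 'I_d -> 'I_d -> R) (a : R) (x : 'I_d -> R) : 'I_d -> R :=
  fun j => a * x j + (1 - a) * \sum_(i < d) K i j * Heav (s i j * (x i - T i j)).

Definition regnet_params (K s T : 'I_d -> 'I_d -> R) (a : R) : Prop :=
  (forall i j, 0 <= K i j <= 1) /\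
  (forall j, \sum_(i < d) K i j = 1) /\
  (forall i j, s i j = -1 \/ s i j = 0 \/ s i j = 1) /\
  (forall i j, s i j = 0 <-> K i j = 0) /\
  (forall i j, 0 <= T i j <= 1) /\
  (forall i j, T i j = 0 <-> K i j = 0) /\
  0 <= a <= 1.

Definition arrow (K : 'I_d -> 'I_d -> R) (i j : 'I_d) : Prop := 0 < K i j.

Definition fmap (K : 'I_d -> 'I_d -> R) (a : R) (j : 'I_d) (eps : 'I_d -> bool)
  (x : R) : R := a * x + (1 - a) * \sum_(i < d) (eps i)%:R * K i j.

Definition coord_injective (K : 'I_d -> 'I_d -> R) (a : R) : Prop :=
  forall (j : 'I_d) (eps eps' : 'I_d -> bool),
    fmap K a j eps <> fmap K a j eps' ->
    forall x y, unitI x -> unitI y -> fmap K a j eps x <> fmap K a j eps' y.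

Definition non_degenerated (K : 'I_d -> 'I_d -> R) : Prop :=
  forall (j : 'I_d) (eps eps' : 'I_d -> bool),
    (forall i, K i j = 0 -> eps i = false) ->
    (forall i, K i j = 0 -> eps' i = false) ->
    \sum_(i < d) (eps i)%:R * K i j = \sum_(i < d) (eps' i)%:R * K i j ->
    eps = eps'.

Definition two_loop_isolated_end (K : 'I_d -> 'I_d -> R) (i j : 'I_d) : Prop :=
  [/\ arrow K i j, (forall k, arrow K k j -> k = i),
      arrow K j i & (forall k, arrow K j k -> k = i)].

Definition Pk (s T : 'I_d -> 'I_d -> R) (k : 'I_d) : set (set R) :=
  [set I | exists2 u0, unitI u0 &
     I = [set u | unitI u /\
           (fun l => Heav (s k l * (u - T k l))) =
           (fun l => Heav (s k l * (u0 - T k l)))]].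

Definition Pbase (s T : 'I_d -> 'I_d -> R) : set (set ('I_d -> R)) :=
  [set B | exists2 I : 'I_d -> set R, (forall k, Pk s T k (I k)) &
     B = [set x | forall k, I k (x k)]].

(* Pt n = P^(n+1) *)
Fixpoint Pt (K s T : 'I_d -> 'I_d -> R) (a : R) (n : nat) : set (set ('I_d -> R)) :=
  match n with
  | 0 => Pbase s T
  | n'.+1 => [set B | exists I J, [/\ Pt K s T a n' I, Pbase s T J,
               B = (regF K s T a @^-1` I) `&` J & B !=set0]]
  end.

(* Qt n = Q^(n+1) = { F^n (I) : I in P^(n+1) } *)
Definition Qt (K s T : 'I_d -> 'I_d -> R) (a : R) (n : nat) : set (set ('I_d -> R)) :=
  [set B | exists2 I, Pt K s T a n I & B = iter n (regF K s T a) @` I].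

Definition proj (k : 'I_d) (B : set ('I_d -> R)) : set R := [set x k | x in B].

(* Q_k^(n+1) *)
Definition Qtk (K s T : 'I_d -> 'I_d -> R) (a : R) (n : nat) (k : 'I_d) : set (set R) :=
  [set proj k B | B in Qt K s T a n].

Definition Cset (K s T : 'I_d -> 'I_d -> R) (a : R) (n : nat) (i j : 'I_d)
  (J : set R) : set (set R) :=
  [set proj j B | B in [set B | Qt K s T a n B /\ proj i B = J]].

(* #C <= m, expressed as: C is covered by the range of a map from 'I_m *)
Definition card_le {X : Type} (C : set X) (m : nat) : Prop :=
  exists f : 'I_m -> X, C `<=` range f.

Definition drives (K s T : 'I_d -> 'I_d -> R) (a : R) (i j : 'I_d) : Prop :=
  exists m : nat, forall (n : nat) (J : set R),
    Qtk K s T a n i J -> card_le (Cset K s T a n i j J) m.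

End RegNet.

(* Main.v *)
Require Import Defs.
From mathcomp Require Import all_boot all_order all_algebra.
From mathcomp Require Import boolp classical_sets reals.
From mathcomp Require Import lra.
Set Implicit Arguments. Unset Strict Implicit. Unset Printing Implicit Defensive.
Import Order.TTheory GRing.Theory Num.Theory.
Local Open Scope ring_scope.
Local Open Scope classical_set_scope.

Section Aux.
Variables (R : realType) (d : nat) (K s T : 'I_d -> 'I_d -> R) (a : R).
Hypothesis hp : regnet_params K s T a.
Local Notation F := (regF K s T a).

Definition cube (x : 'I_d -> R) := forall k, unitI (x k).
Definition bits t x k l := Heav (s k l * (iter t F x k - T k l)).

Lemma Heav01 (v : R) : Heav v = 0 \/ Heav v = 1.
Proof. by rewrite /Heav; case: ifP; auto. Qed.

Lemma Heav0 : Heav (0:R) = 0.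
Proof. by rewrite /Heav lexx. Qed.

Lemma F_cube x : cube x -> cube (F x).
Proof.
move=> hx j; have [hK [hsum [_ [_ [_ [_ ha]]]]]] := hp.
have hS : 0 <= \sum_(i < d) K i j * Heav (s i j * (x i - T i j)) <= 1.
  apply/andP; split.
    apply: sumr_ge0 => i _; have /andP[h0 h1] := hK i j.
    by case: (Heav01 (s i j * (x i - T i j))) => ->; lra.
  rewrite -(hsum j); apply: ler_sum => i _; have /andP[h0 h1] := hK i j.
  by case: (Heav01 (s i j * (x i - T i j))) => ->; lra.
move: hS (hx j) ha; rewrite /unitI /regF /= => /andP[h0 h1] /andP[h2 h3] /andP[h4 h5].
apply/andP; split; nra.
Qed.

Lemma iter_cube t x : cube x -> cube (iter t F x).
Proof. by move=> hx; elim: t => //= t IH; apply: F_cube. Qed.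

Definition Cell n x0 : set ('I_d -> R) :=
  [set x | cube x /\ forall t, (t <= n)%N -> forall k l, bits t x k l = bits t x0 k l].

Lemma Pbase_char J : Pbase s T J -> exists2 x0, cube x0 & J = Cell 0 x0.
Proof.
case=> Ik hIk ->.
have [e he] : {e : 'I_d -> R & forall k, unitI (e k) /\
   Ik k = [set u | unitI u /\ (fun l => Heav (s k l * (u - T k l))) =
           (fun l => Heav (s k l * (e k - T k l)))]}.
  apply: (@choice _ _ (fun k (u : R) => unitI u /\ Ik k = [set v | unitI v /\ (fun l => Heav (s k l * (v - T k l))) = (fun l => Heav (s k l * (u - T k l)))])) => k.
  by case: (hIk k) => u0 hu0 eu; exists u0.
exists e; first by move=> k; case: (he k).
apply/seteqP; split=> x /=.
  move=> hx; split.
    by move=> k; have := hx k; rewrite (proj2 (he k)); case.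
  move=> t; rewrite leqn0 => /eqP -> k l; have := hx k; rewrite (proj2 (he k)).
  by case=> _ /(congr1 (fun f => f l)).
case=> hc hb k; rewrite (proj2 (he k)); split; first exact: hc.
by apply: funext => l; exact: (hb 0%N (leqnn 0) k l).
Qed.

Lemma Pt_char n I : Pt K s T a n I -> exists2 x0, cube x0 & I = Cell n x0.
Proof.
elim: n I => [|n IH] I; first exact: Pbase_char.
case=> I0 [J0 [hI hJ -> [x2 hx2]]].
have [x0 hx0 eI] := IH _ hI; have [x1 hx1 eJ] := Pbase_char hJ.
rewrite eI eJ in hx2 *; case: hx2 => [[hc2 hb2] [hc2' hb2']].
exists x2 => //.
apply/seteqP; split=> x /=.
  case=> [[hc hb] [hc' hb']]; split => // -[|t] ht k l.
    by rewrite (hb' 0%N erefl) -(hb2' 0%N erefl).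
  by have := hb t ht k l; have := hb2 t ht k l; rewrite /bits !iterSr => -> ->.
case=> hc hb; split; split.
- exact: F_cube.
- move=> t ht k l; have := hb t.+1 ht k l; have := hb2 t ht k l.
  by rewrite /bits !iterSr => -> ->.
- exact: hc.
- move=> t; rewrite leqn0 => /eqP -> k l.
  by rewrite (hb 0%N erefl) -(hb2' 0%N erefl).
Qed.

Lemma cell_cube n I x : Pt K s T a n I -> I x -> cube x.
Proof. by case/Pt_char=> x0 _ -> []. Qed.

Lemma cell_same n I x w : Pt K s T a n I -> I x -> I w ->
  forall t, (t <= n)%N -> forall k l, bits t w k l = bits t x k l.
Proof.
case/Pt_char=> x0 _ -> [_ hx] [_ hw] t ht k l.
by rewrite (hw t ht k l) (hx t ht k l).
Qed.

Lemma cell_in n I x w : Pt K s T a n I -> I x -> cube w ->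
  (forall t, (t <= n)%N -> forall k l, bits t w k l = bits t x k l) -> I w.
Proof.
case/Pt_char=> x0 _ -> [_ hx] hw hb; split => // t ht k l.
by rewrite (hb t ht k l) (hx t ht k l).
Qed.

Lemma cell_ne n I : Pt K s T a n I -> exists x, I x.
Proof. by case/Pt_char=> x0 hx0 ->; exists x0; split. Qed.

Lemma Kge0 k l : 0 <= K k l.
Proof. by have [hK _] := hp; case/andP: (hK k l). Qed.

Lemma K0s0 k l : K k l = 0 -> s k l = 0.
Proof. by have [_ [_ [_ [hs _]]]] := hp; move/(proj2 (hs k l)). Qed.

Lemma notarrow0 k l : ~ arrow K k l -> K k l = 0.
Proof.
rewrite /arrow => h; apply/eqP; rewrite eq_le Kge0 andbT.
by rewrite leNgt; apply/negP.
Qed.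

Lemma Heav_nat (v : R) : Heav v = (Heav v != 0)%:R.
Proof. by case: (Heav01 v) => ->; rewrite ?eqxx ?oner_eq0. Qed.

Lemma F_fmap x i : F x i = fmap K a i (fun l => Heav (s l i * (x l - T l i)) != 0) (x i).
Proof.
rewrite /regF /fmap; congr (_ + _ * _); apply: eq_bigr => l _.
by rewrite mulrC -Heav_nat.
Qed.

Lemma F_id : a = 1 -> forall x, F x = x.
Proof. by move=> -> x; apply: funext => k; rewrite /regF subrr mul0r addr0 mul1r. Qed.

Lemma iter_id : a = 1 -> forall t x, iter t F x = x.
Proof. by move=> h; elim=> //= t IH x; rewrite IH F_id. Qed.

Section Loop.
Variables (i j : 'I_d).
Hypothesis hl : two_loop_isolated_end K i j.
Hypothesis hij : i != j.
Hypothesis hci : coord_injective K a.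
Hypothesis hnd : non_degenerated K.

Lemma K_in_j k : k != i -> K k j = 0.
Proof.
case: hl => _ h _ _ hk; apply: notarrow0 => /h e; by rewrite e eqxx in hk.
Qed.

Lemma K_out_j l : l != i -> K j l = 0.
Proof.
case: hl => _ _ _ h hk; apply: notarrow0 => /h e; by rewrite e eqxx in hk.
Qed.

Lemma K_ij : K i j = 1.
Proof.
have [_ [hsum _]] := hp; rewrite -(hsum j) (bigD1 i) //= big1 ?addr0 //.
by move=> k hk; apply: K_in_j.
Qed.

Lemma F_j x : F x j = a * x j + (1 - a) * Heav (s i j * (x i - T i j)).
Proof.
rewrite /regF (bigD1 i) //= big1 ?addr0 ?K_ij ?mul1r //.
by move=> k hk; rewrite K_in_j ?mul0r.
Qed.

Lemma back_step y y' : cube y -> cube y' -> a != 1 -> a != 0 -> F y i = F y' i ->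
  y i = y' i /\ Heav (s j i * (y j - T j i)) = Heav (s j i * (y' j - T j i)).
Proof.
move=> hy hy' ha1 ha0; rewrite !F_fmap.
set eps := fun l => _; set eps' := fun l => _ => hF.
have heq : fmap K a i eps = fmap K a i eps'.
  case: (pselect (fmap K a i eps = fmap K a i eps')) => // hne.
  by exfalso; exact: (hci hne (hy i) (hy' i) hF).
have h1a : 1 - a != 0 by rewrite subr_eq0 eq_sym.
have hS := congr1 (fun f => f 0) heq; rewrite /fmap /= !mulr0 !add0r in hS.
have hS' := mulfI h1a hS.
have he : eps = eps'.
  apply: (hnd (j := i)) => // l hl0; rewrite /eps /eps' K0s0 // mul0r Heav0 eqxx //.
split.
  move: hF; rewrite /fmap hS' => /addIr; exact: mulfI.
have := congr1 (fun e => e j) he; rewrite /eps /eps' /=.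
by case: (Heav01 (s j i * (y j - T j i))) => ->;
   case: (Heav01 (s j i * (y' j - T j i))) => -> //; rewrite ?eqxx ?oner_eq0.
Qed.

Lemma backward n x x' : cube x -> cube x' -> a != 1 -> a != 0 ->
  iter n F x i = iter n F x' i -> forall t, (t <= n)%N -> iter t F x i = iter t F x' i.
Proof.
move=> hx hx' ha1 ha0 hn.
suff H : forall k t, (t + k = n)%N -> iter t F x i = iter t F x' i.
  by move=> t ht; apply: (H (n - t)%N); rewrite subnKC.
elim=> [|k IH] t htk; first by move: hn; rewrite -htk addn0.
have htk1 : (t.+1 + k = n)%N by rewrite addSnnS.
have := IH t.+1 htk1; rewrite !iterS => h.
by case: (back_step (iter_cube t hx) (iter_cube t hx') ha1 ha0 h).
Qed.

Lemma step1 n x x' : cube x -> cube x' -> (a != 0 \/ n = 0%N) ->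
  iter n F x i = iter n F x' i -> bits n x j i = bits n x' j i ->
  forall t, (t < n)%N -> bits t x i j = bits t x' i j /\ bits t x j i = bits t x' j i.
Proof.
move=> hx hx' han hn hb t ht.
case: han => [ha0|hn0]; last by rewrite hn0 in ht.
case: (eqVneq a 1) => ha1.
  by move: hn hb; rewrite /bits !(iter_id ha1) => hn hb; rewrite hn hb.
have ht' := ltnW ht; have hti := backward hx hx' ha1 ha0 hn.
split; first by rewrite /bits (hti t ht').
have := hti t.+1 ht; rewrite !iterS => h.
by case: (back_step (iter_cube t hx) (iter_cube t hx') ha1 ha0 h).
Qed.

Definition splice (z x' : 'I_d -> R) := fun k => if k == j then z j else x' k.

Lemma splice_iter n z x' :
  (forall t, (t < n)%N -> bits t z i j = bits t x' i j /\ bits t z j i = bits t x' j i) ->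
  forall t, (t <= n)%N -> (forall k, k != j -> iter t F (splice z x') k = iter t F x' k)
     /\ iter t F (splice z x') j = iter t F z j.
Proof.
move=> hb; elim=> [|t IH] ht.
  by split=> [k hk|]; rewrite /= /splice ?(negbTE hk) ?eqxx.
have [IH1 IH2] := IH (ltnW ht); have [hbi hbj] := hb t ht.
rewrite !iterS; split=> [k hk|].
  rewrite /regF IH1 //; congr (_ + _ * _); apply: eq_bigr => l _.
  case: (eqVneq l j) => [->|hl']; last by rewrite IH1.
  case: (eqVneq k i) => [->|hki]; last by rewrite K_out_j ?mul0r.
  by rewrite IH2; congr (_ * _); exact: hbj.
rewrite !F_j IH2 (IH1 i hij); congr (_ + _ * _); symmetry; exact: hbi.
Qed.

Lemma key n I I' x x' : Pt K s T a n I -> Pt K s T a n I' -> I x -> I' x' ->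
  (a != 0 \/ n = 0%N) ->
  iter n F x i = iter n F x' i -> bits n x j i = bits n x' j i ->
  proj j (iter n F @` I) `<=` proj j (iter n F @` I').
Proof.
move=> hI hI' hx hx' han hn hbn.
have hcx := cell_cube hI hx; have hcx' := cell_cube hI' hx'.
have hs1 := step1 hcx hcx' han hn hbn.
move=> _ [_ [z hz <-] <-].
have hcz := cell_cube hI hz.
have hsz : forall t, (t < n)%N -> bits t z i j = bits t x' i j /\ bits t z j i = bits t x' j i.
  move=> t ht; have [h1 h2] := hs1 t ht.
  by rewrite !(cell_same hI hx hz (ltnW ht)) h1 h2.
have hsp := splice_iter hsz.
exists (iter n F (splice z x')); last by rewrite (proj2 (hsp n (leqnn n))).
exists (splice z x') => //.
apply: (cell_in hI' hx').
  by move=> k; rewrite /splice; case: ifP.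
move=> t ht k l; case: (eqVneq k j) => [->|hk].
  case: (eqVneq l i) => [->|hli]; last by rewrite /bits (K0s0 (K_out_j hli)) !mul0r.
  transitivity (bits t z j i); first by rewrite /bits (proj2 (hsp t ht)).
  rewrite (cell_same hI hx hz ht).
  move: ht; rewrite leq_eqVlt => /orP [/eqP ->|ht]; first exact: hbn.
  exact: (proj2 (hs1 t ht)).
by rewrite /bits (proj1 (hsp t ht) k hk).
Qed.

Lemma a0_proj n I : a = 0 -> Pt K s T a n.+1 I ->
  exists b : 'I_2, proj j (iter n.+1 F @` I) = [set (b : nat)%:R].
Proof.
move=> ha hI; have [x0 hx0] := cell_ne hI.
have hF0 : forall y, F y j = Heav (s i j * (y i - T i j)).
  by move=> y; rewrite F_j ha mul0r add0r subr0 mul1r.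
have e : proj j (iter n.+1 F @` I) = [set bits n x0 i j].
  apply/seteqP; split=> v /=.
    case=> _ [z hz <-] <-; rewrite iterS hF0.
    exact: (cell_same hI hx0 hz (leqnSn n) i j).
  move=> ->; exists (iter n.+1 F x0); first by exists x0.
  by rewrite iterS hF0.
rewrite e; case: (Heav01 (s i j * (iter n F x0 i - T i j))) => h.
  by exists ord0; rewrite /bits h.
by exists ord_max; rewrite /bits h.
Qed.

Lemma same_class (A A' : set R) (h : R -> R) : A !=set0 -> A' !=set0 ->
  (forall y, h y = 0 \/ h y = 1) ->
  `[< exists y, A y /\ h y = 1 >] = `[< exists y, A' y /\ h y = 1 >] ->
  exists y y', [/\ A y, A' y' & h y = h y'].
Proof.
move=> [y hy] [y' hy'] h01.
case: (asboolP (exists y, A y /\ h y = 1)) => [[u [hu hu1]]|hn];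
case: (asboolP (exists y, A' y /\ h y = 1)) => [[u' [hu' hu1']]|hn'] // _.
  by exists u, u'; split=> //; rewrite hu1 hu1'.
exists y, y'; split=> //.
case: (h01 y) => e; last by exfalso; apply: hn; exists y.
case: (h01 y') => e'; last by exfalso; apply: hn'; exists y'.
by rewrite e e'.
Qed.

Lemma proj_ne n I k : Pt K s T a n I -> proj k (iter n F @` I) !=set0.
Proof.
by move=> hI; have [x0 hx0] := cell_ne hI; exists (iter n F x0 k); exists (iter n F x0) => //; exists x0.
Qed.

Lemma card2_class' (C : set (set R)) (g : set R -> bool) :
  (forall A A', C A -> C A' -> g A = g A' -> A = A') -> card_le C 2.
Proof.
move=> hinj.
have [f hf] : {f : 'I_2 -> set R & forall k, (exists A', C A' /\ g A' = (k == ord_max)) ->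
     C (f k) /\ g (f k) = (k == ord_max)}.
  apply: (@choice _ _ (fun k A => (exists A', C A' /\ g A' = (k == ord_max)) ->
     C A /\ g A = (k == ord_max))) => k.
  case: (pselect (exists A', C A' /\ g A' = (k == ord_max))) => [[A' hA']|hn].
    by exists A'.
  by exists set0.
exists f => A hA; exists (if g A then ord_max else ord0) => //.
have hgA : g A = ((if g A then ord_max else ord0) == ord_max :> 'I_2) by case: (g A).
have [hC hg] := hf (if g A then ord_max else ord0) (ex_intro _ A (conj hA hgA)).
by apply: hinj => //; rewrite hg; case: (g A).
Qed.

Lemma drives_neq : drives K s T a i j.
Proof.
exists 2%N => n J [B hB eJ].
have [[[n' en] ha0]|han] : ((exists n', n = n'.+1) /\ a = 0) \/ (a != 0 \/ n = 0%N).
  case: (eqVneq a 0) => ha; last by right; left.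
  by case En: n => [|n']; [right; right | left; split => //; exists n'].
  subst n; exists (fun b : 'I_2 => [set (b : nat)%:R]) => A [B' [hB' hJ'] <-].
  case: hB' => I' hI' ->; have [b hb] := a0_proj ha0 hI'.
  by exists b.
apply: (card2_class' (g := fun A => `[< exists y, A y /\ Heav (s j i * (y - T j i)) = 1 >])).
move=> A A' [B1 [hB1 hJ1] <-] [B2 [hB2 hJ2] <-] hg.
case: hB1 => I1 hI1 eB1; case: hB2 => I2 hI2 eB2; subst B1 B2.
have [y [y' [[_ [w1 hw1 <-] <-] [_ [w2 hw2 <-] <-] hjb]]] :=
  same_class (proj_ne j hI1) (proj_ne j hI2) (fun y => Heav01 _) hg.
have : proj i (iter n F @` I2) (iter n F w1 i).
  by rewrite hJ2 -hJ1; exists (iter n F w1) => //; exists w1.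
case=> _ [x' hx' <-] ex'.
have hb : bits n w1 j i = bits n x' j i.
  by rewrite (cell_same hI2 hw2 hx' (leqnn n)).
apply/seteqP; split.
  exact: (key hI1 hI2 hw1 hx' han (esym ex') hb).
exact: (key hI2 hI1 hx' hw1 han ex' (esym hb)).
Qed.

End Loop.

Lemma card2_class (C : set (set R)) (g : set R -> bool) :
  (forall A A', C A -> C A' -> g A = g A' -> A = A') -> card_le C 2.
Proof.
move=> hinj.
have [f hf] : {f : 'I_2 -> set R & forall k, (exists A', C A' /\ g A' = (k == ord_max)) ->
     C (f k) /\ g (f k) = (k == ord_max)}.
  apply: (@choice _ _ (fun k A => (exists A', C A' /\ g A' = (k == ord_max)) ->
     C A /\ g A = (k == ord_max))) => k.
  case: (pselect (exists A', C A' /\ g A' = (k == ord_max))) => [[A' hA']|hn].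
    by exists A'.
  by exists set0.
exists f => A hA; exists (if g A then ord_max else ord0) => //.
have hgA : g A = ((if g A then ord_max else ord0) == ord_max :> 'I_2) by case: (g A).
have [hC hg] := hf (if g A then ord_max else ord0) (ex_intro _ A (conj hA hgA)).
by apply: hinj => //; rewrite hg; case: (g A).
Qed.

Lemma drives_all i j : two_loop_isolated_end K i j -> coord_injective K a ->
  non_degenerated K -> drives K s T a i j.
Proof.
move=> hl hci hnd; case: (eqVneq i j) => [<-|hij]; last exact: drives_neq.
exists 2%N => n J [B hB eJ]; exists (fun _ => J) => A [B' [_ hB'] <-].
by exists ord0.
Qed.

End Aux.

Theorem mainTheorem10 (R : realType) (d : nat)
  (K s T : 'I_d -> 'I_d -> R) (a : R) (i j : 'I_d) :
  regnet_params K s T a ->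
  coord_injective K a ->
  non_degenerated K ->
  two_loop_isolated_end K i j ->
  drives K s T a i j.
Proof.
by move=> hp hci hnd hl; apply: drives_all.
Qed.
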